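(* There is a constant $c>0$ such that, for every $n$, if the adversary generating the dynamic graphs $G_1=(V,E_1),G_2=(V,E_2),\dots$ on $n$ nodes is allowed to choose the edge sets $E_1,E_2,\dots$ adaptively without having to preserve node degrees, then there is such an adaptive adversary and an initial assignment of opinions for which the expected consensus time of the standard voter model is at least $\Omega\big((n/c)^{n/c}\big)$.
   Context: Standard voter model on a sequence of graphs $G_1,G_2,\dots$ on a common vertex set $V$ of $n$ nodes: every node initially holds an opinion; in each synchronous round $t$, every node independently chooses a neighbour in $G_t$ uniformly at random and with probability $1/2$ adopts that neighbour's opinion (as at the start of the round), otherwise keeps its own. An adaptive adversary chooses $G_{t+1}$ knowing the opinions of all nodes up to round $t$. The consensus time is the first round after which all nodes hold the same opinion. *)

(* Defs.v *)
From HB Require Import structures.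
From mathcomp Require Import all_boot all_order all_algebra.
From mathcomp Require Import all_classical all_reals all_analysis.
Set Implicit Arguments. Unset Strict Implicit. Unset Printing Implicit Defensive.
Import Order.TTheory GRing.Theory Num.Theory.
Local Open Scope ring_scope.

(* Opinions are taken in 'I_n: any initial assignment of
   arbitrary opinions to n nodes is, up to relabelling of opinions, one with
   at most n distinct opinions, so this loses no generality. *)
Definition config (n : nat) := {ffun 'I_n -> 'I_n}.

Definition valid_graph (n : nat) (e : rel 'I_n) : Prop :=
  (forall u v, e u v = e v u) /\ (forall u, e u u = false) /\
  (forall u v, connect e u v).

Definition consensus (n : nat) (x : config n) : bool :=
  [forall u, forall v, x u == x v].

(* Probability that, in one synchronous round of the standard voter model on
   graph e, configuration x moves to configuration y: each node v
   independently keeps its opinion w.p. 1/2, and otherwise adopts the opinion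
   (at the start of the round) of a uniformly random neighbour in e. *)
Definition vm_trans (R : realType) (n : nat) (e : rel 'I_n)
    (x y : config n) : R :=
  \prod_(v : 'I_n)
    ((x v == y v)%:R / 2 +
     #|[set u | e v u && (x u == y v)]|%:R / (2 * #|[set u | e v u]|%:R)).

(* An adaptive adversary: given the history of opinion configurations
   x_0, ..., x_t (as a sequence), it chooses the graph G_{t+1}. *)
Definition adversary (n : nat) := seq (config n) -> rel 'I_n.

Definition valid_adversary (n : nat) (A : adversary n) : Prop :=
  forall h, valid_graph (A h).

(* surv A h x t = probability that the process, currently with history h
   (whose last element is the current configuration x), is in a
   non-consensus configuration at each of the current time and the next t
   rounds. *)
Fixpoint surv (R : realType) (n : nat) (A : adversary n)
    (h : seq (config n)) (x : config n) (t : nat) : R :=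
  if consensus x then 0 else
  match t with
  | 0 => 1
  | t'.+1 => \sum_(y : config n) vm_trans R (A h) x y * surv R A (rcons h y) y t'
  end.

(* P(T > t), where T = min { t | x_t is a consensus configuration }. *)
Definition prob_T_gt (R : realType) (n : nat) (A : adversary n)
    (x0 : config n) (t : nat) : R := surv R A [:: x0] x0 t.

(* E[T] = sum_{t >= 0} P(T > t), in the extended reals (may be +oo). *)
Definition expected_consensus_time (R : realType) (n : nat) (A : adversary n)
    (x0 : config n) : \bar R :=
  (\sum_(0 <= t <oo) (prob_T_gt R A x0 t)%:E)%E.

(* Main.v *)
Require Import Defs.
From HB Require Import structures.
From mathcomp Require Import all_boot all_order all_algebra.
From mathcomp Require Import all_classical all_reals all_analysis.
From mathcomp Require Import zify ring lra.
Import Order.TTheory GRing.Theory Num.Theory.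
Set Implicit Arguments. Unset Strict Implicit. Unset Printing Implicit Defensive.
Local Open Scope ring_scope.
Definition upd1 n (x : config n) (v a : 'I_n) : config n :=
  [ffun t => if t == v then a else x t].

Lemma upd1E n (x : config n) v a t : upd1 x v a t = if t == v then a else x t.
Proof. by rewrite ffunE. Qed.

Lemma prod_ind (R : realType) n (F : 'I_n -> 'I_n -> R) (x : config n) u w (y : config n) :
  u != w -> (forall v a, v != u -> v != w -> F v a = (x v == a)%:R) ->
  \prod_v F v (y v) =
  F u (y u) * F w (y w) * (y == upd1 (upd1 x u (y u)) w (y w))%:R.
Proof.
move=> uw HF.
rewrite (bigD1 u) //= (bigD1 w) //=; last by rewrite eq_sym.
rewrite mulrA.
have [->|ne] := eqVneq y _.
  rewrite mulr1 big1 ?mulr1 // => v /andP[vu vw].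
  rewrite HF // !upd1E (negbTE vu) (negbTE vw) eqxx //.
rewrite mulr0.
have [v Hv] : exists v, y v != upd1 (upd1 x u (y u)) w (y w) v.
  apply/existsP; move: ne; apply: contraR; rewrite negb_exists => /forallP H.
  by apply/eqP/ffunP => v; apply/eqP; move: (H v); rewrite negbK.
move: Hv; rewrite !upd1E.
have [->|vw] := eqVneq v w; first by rewrite eqxx.
have [->|vu] := eqVneq v u; first by rewrite eqxx.
move=> Hv.
rewrite (bigD1 v) /=; last by rewrite vu vw.
by rewrite (HF v) // (eq_sym (x v)) (negbTE Hv) mul0r !mulr0.
Qed.

Lemma sum_lemma (R : realType) n (F : 'I_n -> 'I_n -> R) (x : config n) u w (g : config n -> R) :
  u != w -> (forall v a, v != u -> v != w -> F v a = (x v == a)%:R) ->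
  \sum_(y : config n) (\prod_v F v (y v)) * g y =
  \sum_a \sum_b F u a * F w b * g (upd1 (upd1 x u a) w b).
Proof.
move=> uw HF.
have E : forall y : config n, (\prod_v F v (y v)) * g y =
   \sum_a \sum_b ((y == upd1 (upd1 x u a) w b)%:R * (F u a * F w b * g (upd1 (upd1 x u a) w b))).
  move=> y; rewrite (prod_ind y uw HF).
  rewrite (bigD1 (y u)) //= (bigD1 (y w)) //= big1 ?addr0; last first.
    move=> b /eqP nb; case: eqP => [Ey|]; last by rewrite mul0r.
    by exfalso; apply: nb; rewrite Ey !upd1E eqxx.
  rewrite big1 ?addr0; last first.
    move=> a /eqP na; rewrite big1 // => b _; case: eqP => [Ey|]; last by rewrite mul0r.
    by exfalso; apply: na; rewrite Ey !upd1E eqxx; case: eqP uw => // ->; rewrite eqxx.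
  case: eqP => [Ey|_]; first by rewrite mulr1 mul1r -Ey.
  by rewrite !(mulr0, mul0r).
rewrite (eq_bigr _ (fun y _ => E y)) exchange_big /=.
apply: eq_bigr => a _; rewrite exchange_big /=; apply: eq_bigr => b _.
rewrite (bigD1 (upd1 (upd1 x u a) w b)) //= eqxx mul1r big1 ?addr0 //.
by move=> y /negbTE ->; rewrite mul0r.
Qed.

Definition cnt n (x : config n) (c : 'I_n) : nat := #|[set v | x v == c]|.

Lemma cnt_upd1 n (x : config n) v a c :
  (cnt (upd1 x v a) c + (x v == c) = cnt x c + (a == c))%N.
Proof.
rewrite /cnt (cardsD1 v [set t | x t == c]) (cardsD1 v [set t | upd1 x v a t == c]).
rewrite !inE upd1E eqxx.
have -> : [set t | upd1 x v a t == c] :\ v = [set t | x t == c] :\ v.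
  by apply/setP => t; rewrite !inE upd1E; case: eqP.
lia.
Qed.

Lemma sum2 (R : realType) n (F : 'I_n -> R) c1 c2 :
  c1 != c2 -> (forall a, a != c1 -> a != c2 -> F a = 0) -> \sum_a F a = F c1 + F c2.
Proof.
move=> c12 H; rewrite (bigD1 c1) //= (bigD1 c2) /=; last by rewrite eq_sym.
by rewrite big1 ?addr0 // => a /andP[]; apply: H.
Qed.

Lemma vm_trans_ge0 (R : realType) n (e : rel 'I_n) x y : 0 <= vm_trans R e x y.
Proof.
rewrite /vm_trans; by apply: prodr_ge0 => v _; apply: addr_ge0; apply: divr_ge0.
Qed.

Lemma surv_ge0 (R : realType) n (A : adversary n) t h x : 0 <= surv R A h x t.
Proof.
elim: t h x => [|t IH] h x /=; case: (consensus x) => //.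
by apply: sumr_ge0 => y _; apply: mulr_ge0; [apply: vm_trans_ge0|apply: IH].
Qed.

Definition Hyp n (x : config n) (u w z : 'I_n) : Prop :=
  [/\ x u != x w, x z = x w, z != w & forall v, (x v == x u) || (x v == x w)].

Definition des n (x : config n) (u w z : 'I_n) : rel 'I_n :=
  fun a b => (a != b) && (((x a == x b) && (a != w) && (b != w)) ||
     ((a == u) && (b == w)) || ((a == w) && (b == u)) ||
     ((a == w) && (b == z)) || ((a == z) && (b == w))).

Lemma Hyp_uw n (x : config n) u w z : Hyp x u w z -> u != w.
Proof. by case=> H _ _ _; apply: contraNneq H => ->. Qed.

Lemma Hyp_uz n (x : config n) u w z : Hyp x u w z -> u != z.
Proof. by case=> H Hz _ _; apply: contraNneq H => ->; rewrite Hz. Qed.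

Lemma des_sym n (x : config n) u w z : symmetric (des x u w z).
Proof.
move=> a b; rewrite /des (eq_sym b a) (eq_sym (x b) (x a)).
case: (a == b) => //=.
by case: (a == u); case: (b == u); case: (a == w); case: (b == w);
   case: (a == z); case: (b == z); case: (x a == x b).
Qed.

Lemma des_irr n (x : config n) u w z a : des x u w z a a = false.
Proof. by rewrite /des eqxx. Qed.

Lemma des_conn n (x : config n) u w z : Hyp x u w z -> forall a b, connect (des x u w z) a b.
Proof.
move=> H; have uw := Hyp_uw H; have uz := Hyp_uz H.
case: H => xuw xz zw two.
have toW : forall a, connect (des x u w z) a w.
  move=> a.
  have [->|aw] := eqVneq a w; first exact: connect0.
  have uW : des x u w z u w by rewrite /des uw !eqxx /= !(orbT, orTb, andbT).
  have [->|au] := eqVneq a u; first exact: connect1.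
  have [->|az] := eqVneq a z; first by apply: connect1; rewrite /des zw !eqxx !orbT.
  case/orP: (two a) => /eqP xa.
    apply: (connect_trans (connect1 (_ : des x u w z a u))) ; last exact: connect1.
    by rewrite /des au xa eqxx aw /= (negbTE uw).
  apply: (connect_trans (connect1 (_ : des x u w z a z))) ; last first.
    by apply: connect1; rewrite /des zw !eqxx !orbT.
  by rewrite /des az xa xz eqxx aw /= zw.
move=> a b; apply: connect_trans (toW a) _.
by rewrite (sym_connect_sym (@des_sym n x u w z)) toW.
Qed.

Lemma des_other n (x : config n) u w z v t : Hyp x u w z -> v != u -> v != w ->
  des x u w z v t -> x t = x v.
Proof.
case=> xuw xz zw two vu vw; rewrite /des (negbTE vu) (negbTE vw) /=.
case/andP=> _; rewrite !orbF.
case/orP => [/andP[/andP[/eqP -> _] _]|/andP[/eqP -> /eqP ->]] //.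
Qed.

Lemma des_u n (x : config n) u w z t : Hyp x u w z ->
  des x u w z u t = ((x t == x u) && (t != u)) || (t == w).
Proof.
move=> H; have uw := Hyp_uw H; have uz := Hyp_uz H; case: H => xuw xz zw two.
rewrite /des eqxx (negbTE uw) (negbTE uz) /= !orbF andbT.
have [->|tw] := eqVneq t w; first by rewrite uw !orbT.
by rewrite !orbF andbT (eq_sym u) (eq_sym (x u)) andbC.
Qed.

Lemma des_w n (x : config n) u w z t : Hyp x u w z ->
  des x u w z w t = (t == u) || (t == z).
Proof.
move=> H; have uw := Hyp_uw H; have uz := Hyp_uz H; case: H => xuw xz zw two.
rewrite /des eqxx (eq_sym w u) (negbTE uw) (eq_sym w z) (negbTE zw) /= !andbF /=.
have [->|tu] := eqVneq t u; first by rewrite eq_sym uw.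
have [->|tz] := eqVneq t z; first by rewrite eq_sym zw.
by rewrite andbF.
Qed.

Definition Fv (R : realType) n (e : rel 'I_n) (x : config n) (v a : 'I_n) : R :=
  (x v == a)%:R / 2 + #|[set t | e v t && (x t == a)]|%:R / (2 * #|[set t | e v t]|%:R).

Lemma vm_transE (R : realType) n (e : rel 'I_n) x y :
  vm_trans R e x y = \prod_v Fv R e x v (y v).
Proof. by []. Qed.

Lemma F_other (R : realType) n (x : config n) u w z v a : Hyp x u w z -> v != u -> v != w ->
  Fv R (des x u w z) x v a = (x v == a)%:R.
Proof.
move=> H vu vw; have uw := Hyp_uw H; have uz := Hyp_uz H.
have Hd : (0 < #|[set t | des x u w z v t]|)%N.
  case: H => xuw xz zw two.
  apply/card_gt0P.
  case/orP: (two v) => /eqP xv.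
    by exists u; rewrite inE /des vu xv eqxx vw uw.
  have [->|vz] := eqVneq v z.
    by exists w; rewrite inE /des zw !eqxx !orbT.
  by exists z; rewrite inE /des vz xv xz eqxx vw zw.
have E : [set t | des x u w z v t && (x t == a)] =
         if x v == a then [set t | des x u w z v t] else finset.set0.
  apply/setP => t; rewrite !inE.
  case Hvt: (des x u w z v t) => //=; last by case: (x v == a); rewrite ?inE.
  by rewrite (des_other H vu vw Hvt); case: (x v == a); rewrite ?inE.
rewrite /Fv E; case: (x v == a); last by rewrite cards0 !mul0r addr0.
rewrite mul1r; have Hd' : (#|[set t | des x u w z v t]|%:R : R) != 0.
  by rewrite pnatr_eq0 -lt0n.
rewrite [true%:R]/=; by field.
Qed.

Lemma card_u n (x : config n) u w z : Hyp x u w z ->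
  #|[set t | des x u w z u t]| = cnt x (x u).
Proof.
move=> H; have uw := Hyp_uw H; case: (H) => xuw xz zw two.
have -> : [set t | des x u w z u t] = w |: ([set t | x t == x u] :\ u).
  by apply/setP => t; rewrite !inE (des_u _ H) orbC andbC.
rewrite cardsU1.
have -> : (w \in [set t | x t == x u] :\ u) = false.
  by rewrite !inE (eq_sym (x w)) (negbTE xuw) andbF.
by rewrite /cnt (cardsD1 u [set t | x t == x u]) inE eqxx.
Qed.

Lemma card_u_self n (x : config n) u w z : Hyp x u w z ->
  #|[set t | des x u w z u t && (x t == x u)]| = (cnt x (x u)).-1.
Proof.
move=> H; have uw := Hyp_uw H; case: (H) => xuw xz zw two.
have -> : [set t | des x u w z u t && (x t == x u)] = [set t | x t == x u] :\ u.
  apply/setP => t; rewrite !inE (des_u _ H).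
  have [->|tw] := eqVneq t w; last by rewrite orbF; case: (x t == x u); rewrite ?andbF.
  rewrite orbT; case: eqP => [E|]; [by move: xuw; rewrite E eqxx|by rewrite !andbF].
by rewrite /cnt (cardsD1 u [set t | x t == x u]) inE eqxx.
Qed.

Lemma card_u_w n (x : config n) u w z : Hyp x u w z ->
  #|[set t | des x u w z u t && (x t == x w)]| = 1%N.
Proof.
move=> H; have uw := Hyp_uw H; case: (H) => xuw xz zw two.
have -> : [set t | des x u w z u t && (x t == x w)] = [set w].
  apply/setP => t; rewrite !inE (des_u _ H).
  have [->|tw] := eqVneq t w; first by rewrite eqxx orbT.
  rewrite orbF; case: eqP => //= ->; by rewrite (negbTE xuw) andbF.
by rewrite cards1.
Qed.

Lemma card_u_0 n (x : config n) u w z a : Hyp x u w z -> a != x u -> a != x w ->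
  #|[set t | des x u w z u t && (x t == a)]| = 0%N.
Proof.
move=> H au aw; apply/eqP; rewrite cards_eq0; apply/eqP/setP => t; rewrite !inE (des_u _ H).
have [->|tw] := eqVneq t w; first by rewrite (eq_sym (x w) a) (negbTE aw) !andbF.
rewrite orbF; case: eqP => // ->; by rewrite (eq_sym (x u) a) (negbTE au) !andbF.
Qed.

Lemma card_pt n (c : 'I_n) (b : bool) : #|[set t | (t == c) && b]| = b.
Proof.
case: b; last by apply/eqP; rewrite cards_eq0; apply/eqP/setP => t; rewrite !inE andbF.
have -> : [set t | (t == c) && true] = [set c] by apply/setP => t; rewrite !inE andbT.
exact: cards1.
Qed.

Lemma card_w n (x : config n) u w z a : Hyp x u w z ->
  #|[set t | des x u w z w t && (x t == a)]| = ((a == x u) + (a == x w))%N.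
Proof.
move=> H; have uz := Hyp_uz H; case: (H) => xuw xz zw two.
have -> : [set t | des x u w z w t && (x t == a)] =
   [set t | (t == u) && (x u == a)] :|: [set t | (t == z) && (x w == a)].
  apply/setP => t; rewrite !inE (des_w _ H).
  have [->|tu] := eqVneq t u; first by rewrite ?eqxx (negbTE uz) /= ?orbF ?andbF ?orbF.
  rewrite /=.
  by have [->|tz] := eqVneq t z; rewrite ?xz //= ?andbF.
rewrite cardsU.
have -> : [set t | (t == u) && (x u == a)] :&: [set t | (t == z) && (x w == a)] = finset.set0.
  apply/setP => t; rewrite !inE; case: eqP => //= ->; by rewrite (negbTE uz) andbF.
by rewrite cards0 subn0 !card_pt (eq_sym (x u) a) (eq_sym (x w) a).
Qed.

Lemma card_w_all n (x : config n) u w z : Hyp x u w z ->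
  #|[set t | des x u w z w t]| = 2%N.
Proof.
move=> H; have uz := Hyp_uz H.
have -> : [set t | des x u w z w t] = [set u; z].
  by apply/setP => t; rewrite !inE (des_w _ H).
by rewrite cards2 uz.
Qed.

Lemma cnt_pos n (x : config n) v : (0 < cnt x (x v))%N.
Proof. by apply/card_gt0P; exists v; rewrite inE. Qed.

Lemma F_u_self (R : realType) n (x : config n) u w z : Hyp x u w z ->
  Fv R (des x u w z) x u (x u) = 1 - (2 * (cnt x (x u))%:R)^-1.
Proof.
move=> H; rewrite /Fv card_u_self // card_u // eqxx.
have := cnt_pos x u; case: (cnt x (x u)) => // m _.
rewrite /= -[m.+1]addn1 natrD. rewrite [true%:R]/=.
have : (m%:R : R) + 1 != 0 by rewrite natr1 pnatr_eq0.
move=> hm; by field.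
Qed.

Lemma F_u_w (R : realType) n (x : config n) u w z : Hyp x u w z ->
  Fv R (des x u w z) x u (x w) = (2 * (cnt x (x u))%:R)^-1.
Proof.
move=> H; have xuw : (x u == x w) = false by case: H => /negbTE.
by rewrite /Fv card_u_w // card_u // xuw mul0r add0r div1r.
Qed.

Lemma F_u_0 (R : realType) n (x : config n) u w z a : Hyp x u w z -> a != x u -> a != x w ->
  Fv R (des x u w z) x u a = 0.
Proof.
move=> H au aw; rewrite /Fv card_u_0 // mul0r addr0 (eq_sym (x u) a) (negbTE au).
by rewrite mul0r.
Qed.

Lemma F_w (R : realType) n (x : config n) u w z a : Hyp x u w z ->
  Fv R (des x u w z) x w a = (x w == a)%:R / 2 + ((a == x u) + (a == x w))%N%:R / 4.
Proof.
move=> H; rewrite /Fv card_w // card_w_all //.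
congr (_ + _ / _); rewrite /=; lra.
Qed.

Definition two n (o1 o2 : 'I_n) (x : config n) : bool :=
  [forall v, (x v == o1) || (x v == o2)].
Definition cM n (o1 o2 : 'I_n) (x : config n) := if (cnt x o1 <= cnt x o2)%N then o1 else o2.
Definition cJ n (o1 o2 : 'I_n) (x : config n) := if (cnt x o1 <= cnt x o2)%N then o2 else o1.
Definition uu n (o1 o2 : 'I_n) (x : config n) := odflt o1 [pick v | x v == cM o1 o2 x].
Definition ww n (o1 o2 : 'I_n) (x : config n) := odflt o1 [pick v | x v == cJ o1 o2 x].
Definition zz n (o1 o2 : 'I_n) (x : config n) :=
  odflt o1 [pick v | (x v == cJ o1 o2 x) && (v != ww o1 o2 x)].
Definition good n (o1 o2 : 'I_n) (x : config n) : bool :=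
  [&& two o1 o2 x, (0 < cnt x (cM o1 o2 x))%N & (1 < cnt x (cJ o1 o2 x))%N].
Definition Gr n (o1 o2 : 'I_n) (x : config n) : rel 'I_n :=
  if good o1 o2 x then des x (uu o1 o2 x) (ww o1 o2 x) (zz o1 o2 x)
  else (fun a b => a != b).

Lemma good_facts n (o1 o2 : 'I_n) x : o1 != o2 -> good o1 o2 x ->
  [/\ x (uu o1 o2 x) = cM o1 o2 x, x (ww o1 o2 x) = cJ o1 o2 x &
      Hyp x (uu o1 o2 x) (ww o1 o2 x) (zz o1 o2 x)].
Proof.
move=> o12 /and3P[tw cM0 cJ1].
have xu : x (uu o1 o2 x) = cM o1 o2 x.
  rewrite /uu; case: pickP => [v /eqP //|H].
  by move: cM0; rewrite /cnt; move/card_gt0P => [v]; rewrite inE H.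
have xw : x (ww o1 o2 x) = cJ o1 o2 x.
  rewrite /ww; case: pickP => [v /eqP //|H].
  by move: cJ1; rewrite /cnt => /ltnW /card_gt0P [v]; rewrite inE H.
have [xz zw] : x (zz o1 o2 x) = cJ o1 o2 x /\ zz o1 o2 x != ww o1 o2 x.
  rewrite /zz; case: pickP => [v /andP[/eqP -> ->] //|H].
  move: cJ1; rewrite /cnt (cardsD1 (ww o1 o2 x)) inE xw eqxx add1n ltnS.
  move/card_gt0P => [v]; rewrite !inE andbC; by move: (H v) => /= ->.
have cMJ : cM o1 o2 x != cJ o1 o2 x.
  by rewrite /cM /cJ; case: ifP => _ //; rewrite eq_sym.
split => //; split; rewrite ?xu ?xw ?xz //.
move=> v; rewrite /cM /cJ; case: ifP => _; move/forallP: tw => /(_ v) //.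
by rewrite orbC.
Qed.

Lemma Gr_valid n (o1 o2 : 'I_n) x : o1 != o2 -> valid_graph (Gr o1 o2 x).
Proof.
move=> o12; rewrite /Gr; case: ifP => G.
  have [_ _ H] := good_facts o12 G.
  split; [exact: des_sym| split; [move=> a; exact: des_irr | exact: des_conn]].
split; [by move=> a b; rewrite eq_sym | split; [by move=> a; rewrite eqxx |]].
move=> a b; have [->|ab] := eqVneq a b; first exact: connect0.
exact: connect1.
Qed.

Lemma step_des (R : realType) n (x : config n) u w z (f : config n -> R) : Hyp x u w z ->
  \sum_y vm_trans R (des x u w z) x y * f y =
  (1 - (2 * (cnt x (x u))%:R)^-1) * (1/4) * f (upd1 (upd1 x u (x u)) w (x u)) +
  (1 - (2 * (cnt x (x u))%:R)^-1) * (3/4) * f (upd1 (upd1 x u (x u)) w (x w)) +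
  ((2 * (cnt x (x u))%:R)^-1) * (1/4) * f (upd1 (upd1 x u (x w)) w (x u)) +
  ((2 * (cnt x (x u))%:R)^-1) * (3/4) * f (upd1 (upd1 x u (x w)) w (x w)).
Proof.
move=> H; have uw := Hyp_uw H; have xuw : x u != x w by case: H.
have xwu : (x w == x u) = false by apply/negbTE; rewrite eq_sym.
rewrite (eq_bigr _ (fun y _ => congr1 (fun t => t * f y) (vm_transE R (des x u w z) x y))).
rewrite (@sum_lemma R n (Fv R (des x u w z) x) x u w f uw); last by move=> v a vu vw; apply: F_other.
rewrite (sum2 xuw); last first.
  move=> a au aw; rewrite big1 // => b _; by rewrite (F_u_0 _ H au aw) !mul0r.
have Fw0 : forall a, a != x u -> a != x w -> Fv R (des x u w z) x w a = 0.
  move=> a au aw; rewrite F_w // (negbTE au) (negbTE aw) (eq_sym (x w) a) (negbTE aw).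
  by rewrite !mul0r add0r.
rewrite (sum2 xuw); last by move=> b bu bw; rewrite Fw0 // mulr0 mul0r.
rewrite (sum2 xuw); last by move=> b bu bw; rewrite Fw0 // mulr0 mul0r.
rewrite (F_u_self _ H) (F_u_w _ H) !F_w // !eqxx xwu (negbTE xuw) /=.
rewrite -!addrA; congr (_ * _ * _ + (_ * _ * _ + (_ * _ * _ + _ * _ * _))); lra.
Qed.

Lemma surv_bound (R : realType) n (x0 : config n) (Gf : config n -> rel 'I_n)
  (phi : config n -> R) (d : R) :
  0 <= d -> (forall x, 0 <= phi x) ->
  (forall x, phi x < 1 -> consensus x = false) ->
  (forall x, phi x < 1 -> \sum_y vm_trans R (Gf x) x y = 1) ->
  (forall x, phi x < 1 -> \sum_y vm_trans R (Gf x) x y * phi y <= phi x + d) ->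
  forall t h x, last x0 h = x ->
  1 - phi x - (t.+1)%:R * d <= surv R (fun h => Gf (last x0 h)) h x t.
Proof.
move=> d0 phi0 Pc Ps Pphi t; elim: t => [|t IH] h x hx.
  have [px|px] := ltP (phi x) 1; last first.
    have S := surv_ge0 R (fun h => Gf (last x0 h)) 0 h x; rewrite mul1r; have := phi0 x; lra.
  rewrite /= Pc //; have := phi0 x; rewrite mul1r; lra.
have [px|px] := ltP (phi x) 1; last first.
  have S := surv_ge0 R (fun h => Gf (last x0 h)) t.+1 h x; have := ler0n R t.+2.
  move=> h0; have : 0 <= (t.+2)%:R * d by apply: mulr_ge0.
  lra.
rewrite /= Pc // hx.
apply: le_trans (_ : \sum_y vm_trans R (Gf x) x y * (1 - phi y - (t.+1)%:R * d) <= _); last first.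
  apply: ler_sum => y _; apply: ler_wpM2l; first exact: vm_trans_ge0.
  by apply: IH; rewrite last_rcons.
have E : \sum_y vm_trans R (Gf x) x y * (1 - phi y - (t.+1)%:R * d) =
   (\sum_y vm_trans R (Gf x) x y) * (1 - (t.+1)%:R * d) - \sum_y vm_trans R (Gf x) x y * phi y.
  rewrite mulr_suml -sumrB; apply: eq_bigr => y _; ring.
rewrite E Ps // mul1r; have := Pphi x px.
rewrite -[t.+2]addn1 natrD; lra.
Qed.

Definition gp (R : realType) (r K j : nat) : R := ((r%:R) ^+ (j - K))^-1.

Lemma gp_pos (R : realType) r K j : (0 < r)%N -> 0 < gp R r K j.
Proof. by move=> r0; rewrite /gp invr_gt0 exprn_gt0 // ltr0n. Qed.

Lemma gp_S (R : realType) r K j : (0 < r)%N -> (K <= j)%N -> gp R r K j.+1 * r%:R = gp R r K j.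
Proof.
move=> r0 Kj; rewrite /gp subSn // exprS invfM mulrAC mulVf ?mul1r //.
by rewrite pnatr_eq0 -lt0n.
Qed.

Lemma gp_anti (R : realType) r K j j' : (0 < r)%N -> (j <= j')%N -> gp R r K j' <= gp R r K j.
Proof.
move=> r0 jj; rewrite /gp lef_pV2 ?posrE ?exprn_gt0 ?ltr0n //.
apply: ler_weXn2l; first by rewrite ler1n.
by apply: leq_sub2r.
Qed.

Lemma gp_eq1 (R : realType) r K j : (j <= K)%N -> gp R r K j = 1.
Proof. by move=> jK; rewrite /gp (eqP (_ : j - K == 0)%N) ?expr0 ?invr1 // subn_eq0. Qed.

Lemma gp_le1 (R : realType) r K j : (0 < r)%N -> gp R r K j <= 1.
Proof.
move=> r0; rewrite -(@gp_eq1 R r K 0 (leq0n K)); apply: gp_anti => //.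
Qed.

Lemma ineq_core (R : realType) (G r a P Q d : R) :
  0 < G -> 2 <= r -> 0 < a -> a <= 1/2 -> a * r <= 1/8 -> Q <= r * G -> 0 <= P -> 0 <= d ->
  (P * r <= G \/ (P <= r * G /\ r * G <= d)) ->
  (1 - a) * (1/4) * P + (1 - a) * (3/4) * G + a * (1/4) * G + a * (3/4) * Q <= G + d.
Proof.
move=> G0 r2 a0 a1 ar QG P0 d0 [PG|[PG rGd]].
  have h1 : P * 2 <= P * r by apply: ler_wpM2l.
  have h2 : a * P >= 0 by apply: mulr_ge0 => //; lra.
  have h3 : a * Q <= a * (r * G) by apply: ler_wpM2l => //; lra.
  have h4 : a * r * G <= 1/8 * G by apply: ler_wpM2r => //; lra.
  have h5 : a * G >= 0 by apply: mulr_ge0; lra.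
  rewrite mulrA in h3.
  nra.
have h2 : a * P >= 0 by apply: mulr_ge0 => //; lra.
have h3 : a * Q <= a * (r * G) by apply: ler_wpM2l => //; lra.
have h6 : a * P <= a * (r * G) by apply: ler_wpM2l => //; lra.
have h5 : a * G >= 0 by apply: mulr_ge0; lra.
have h7 : a * (r * G) >= 0 by apply: mulr_ge0; [lra|apply: mulr_ge0; lra].
nra.
Qed.

Definition mu n (o1 o2 : 'I_n) (x : config n) : nat := minn (cnt x o1) (cnt x o2).
Definition phi (R : realType) (r K : nat) n (o1 o2 : 'I_n) (x : config n) : R :=
  if two o1 o2 x then gp R r K (mu o1 o2 x) else 1.

Lemma cnt_two n (o1 o2 : 'I_n) x : o1 != o2 -> two o1 o2 x -> (cnt x o1 + cnt x o2 = n)%N.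
Proof.
move=> o12 tw; rewrite /cnt.
have -> : [set v | x v == o2] = ~: [set v | x v == o1].
  apply/setP => v; rewrite !inE; move/forallP: tw => /(_ v).
  by case: eqP => [->|_] /=; [rewrite (negbTE o12) | move=> ->].
by rewrite cardsC card_ord.
Qed.

Lemma cM_cnt n (o1 o2 : 'I_n) x : cnt x (cM o1 o2 x) = mu o1 o2 x.
Proof. rewrite /cM /mu; case: leqP => h; lia. Qed.

Lemma cJ_cnt n (o1 o2 : 'I_n) x : cnt x (cJ o1 o2 x) = maxn (cnt x o1) (cnt x o2).
Proof. rewrite /cJ; case: leqP => h; lia. Qed.

Lemma phi_small (R : realType) r K n (o1 o2 : 'I_n) x : (0 < r)%N ->
  phi R r K o1 o2 x < 1 -> two o1 o2 x /\ (K < mu o1 o2 x)%N.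
Proof.
move=> r0; rewrite /phi; case: (two o1 o2 x) => //; last by rewrite ltxx.
case: (leqP (mu o1 o2 x) K) => h; last by [].
by rewrite gp_eq1 // ltxx.
Qed.

Lemma good_of n (o1 o2 : 'I_n) x K : o1 != o2 -> two o1 o2 x -> (1 <= K)%N ->
  (K < mu o1 o2 x)%N -> good o1 o2 x.
Proof.
move=> o12 tw K1 Km; rewrite /good tw cM_cnt cJ_cnt /=.
have := cnt_two o12 tw; rewrite /mu in Km *.
lia.
Qed.

Lemma cnt_upd2 n (x : config n) u w a b c : u != w ->
  (cnt (upd1 (upd1 x u a) w b) c + (x u == c) + (x w == c) = cnt x c + (a == c) + (b == c))%N.
Proof.
move=> uw; have := cnt_upd1 (upd1 x u a) w b c; have := cnt_upd1 x u a c.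
rewrite upd1E (eq_sym w u) (negbTE uw); lia.
Qed.


Lemma inv2m_le (R : realType) (m : nat) : (0 < m)%N -> (2 * m%:R)^-1 <= (1/2 : R).
Proof.
move=> m0; rewrite div1r lef_pV2 ?posrE ?mulr_gt0 ?ltr0n //.
have : (1 : R) <= m%:R by rewrite ler1n.
lra.
Qed.

Lemma inv2m_r (R : realType) (m r : nat) : (0 < m)%N -> (4 * r <= m)%N ->
  (2 * m%:R)^-1 * r%:R <= (1/8 : R).
Proof.
move=> m0 h; have mne : (m%:R : R) != 0 by rewrite pnatr_eq0 -lt0n.
have : (4 * r%:R : R) <= m%:R by rewrite -natrM ler_nat.
rewrite ler_pdivrMl ?mulr_gt0 ?ltr0n //.
lra.
Qed.

Lemma phi_upd (R : realType) r K n (o1 o2 : 'I_n) x a b : o1 != o2 -> good o1 o2 x ->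
  (a == cM o1 o2 x) || (a == cJ o1 o2 x) -> (b == cM o1 o2 x) || (b == cJ o1 o2 x) ->
  let y := upd1 (upd1 x (uu o1 o2 x) a) (ww o1 o2 x) b in
  phi R r K o1 o2 y = gp R r K (minn (cnt y (cM o1 o2 x)) (cnt y (cJ o1 o2 x))).
Proof.
move=> o12 G ha hb y.
have [tw _ _] := and3P G.
have inO : forall c, (c == cM o1 o2 x) || (c == cJ o1 o2 x) -> (c == o1) || (c == o2).
  by move=> c; rewrite /cM /cJ; case: ifP => _ //; rewrite orbC.
have ty : two o1 o2 y.
  apply/forallP => v; rewrite /y !upd1E.
  case: (v == ww o1 o2 x); first exact: inO.
  case: (v == uu o1 o2 x); first exact: inO.
  by move/forallP: tw.
rewrite /phi ty /mu /cM /cJ; case: ifP => _ //; by rewrite minnC.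
Qed.

Lemma phi_step (R : realType) r K n (o1 o2 : 'I_n) x : o1 != o2 -> (2 <= r)%N ->
  (4 * r <= K.+1)%N -> (1 <= K)%N -> phi R r K o1 o2 x < 1 ->
  (\sum_y vm_trans R (Gr o1 o2 x) x y = 1) /\
  (\sum_y vm_trans R (Gr o1 o2 x) x y * phi R r K o1 o2 y <=
     phi R r K o1 o2 x + gp R r K (n./2 - 1)).
Proof.
move=> o12 r2 rK K1 px.
have r0 : (0 < r)%N by apply: leq_trans r2.
have [tw Km] := phi_small r0 px.
have G := good_of o12 tw K1 Km.
have [xu xw H] := good_facts o12 G.
have uw := Hyp_uw H; have xuw : x (uu o1 o2 x) != x (ww o1 o2 x) by case: H.
rewrite /Gr G; split.
  rewrite (eq_bigr (fun y => vm_trans R (des x (uu o1 o2 x) (ww o1 o2 x) (zz o1 o2 x)) x y * 1));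
    last by move=> y _; rewrite mulr1.
  rewrite (step_des _ H) /=; set a := (2 * _)^-1; lra.
rewrite (step_des _ H).
set u := uu o1 o2 x in xu H uw xuw *; set w := ww o1 o2 x in xw H uw xuw *.
have xuwF : (x u == x w) = false by apply/negbTE.
have xwuF : (x w == x u) = false by apply/negbTE; rewrite eq_sym.
set m := mu o1 o2 x in Km *.
have cu : cnt x (x u) = m by rewrite xu cM_cnt.
have sum_n := cnt_two o12 tw.
have cw : cnt x (x w) = (n - m)%N by rewrite xw cJ_cnt /m /mu; clear -sum_n; lia.
have mle : (m <= n - m)%N by rewrite /m /mu; clear -sum_n; lia.
have mem1 : (x u == cM o1 o2 x) || (x u == cJ o1 o2 x) by rewrite xu eqxx.
have mem2 : (x w == cM o1 o2 x) || (x w == cJ o1 o2 x) by rewrite xw eqxx orbT.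
rewrite !phi_upd // -xu -xw.
have C := fun a b c => cnt_upd2 x a b c uw.
have E1 := C (x u) (x u) (x u); have E2 := C (x u) (x u) (x w).
have E3 := C (x u) (x w) (x u); have E4 := C (x u) (x w) (x w).
have E5 := C (x w) (x u) (x u); have E6 := C (x w) (x u) (x w).
have E7 := C (x w) (x w) (x u); have E8 := C (x w) (x w) (x w).
rewrite !eqxx xuwF xwuF cu cw /= in E1 E2 E3 E4 E5 E6 E7 E8.
have -> : minn (cnt (upd1 (upd1 x u (x u)) w (x w)) (x u))
               (cnt (upd1 (upd1 x u (x u)) w (x w)) (x w)) = m by clear -E3 E4 mle; lia.
have -> : minn (cnt (upd1 (upd1 x u (x w)) w (x u)) (x u))
               (cnt (upd1 (upd1 x u (x w)) w (x u)) (x w)) = m by clear -E5 E6 mle; lia.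
have -> : minn (cnt (upd1 (upd1 x u (x w)) w (x w)) (x u))
               (cnt (upd1 (upd1 x u (x w)) w (x w)) (x w)) = m.-1 by clear -E7 E8 mle Km; lia.
have -> : minn (cnt (upd1 (upd1 x u (x u)) w (x u)) (x u))
               (cnt (upd1 (upd1 x u (x u)) w (x u)) (x w)) = minn m.+1 (n - m).-1 by clear -E1 E2 mle Km; lia.
rewrite cu /phi tw -/m.
have m0 : (0 < m)%N by clear -Km; lia.
have ha := @inv2m_le R m m0.
have rm : (4 * r <= m)%N by clear -Km rK; lia.
have har := @inv2m_r R m r m0 rm.
have a0 : (0 : R) < (2 * m%:R)^-1 by rewrite invr_gt0 mulr_gt0 // ltr0n.
have rR : (2 : R) <= r%:R by rewrite ler_nat.
have GQ : gp R r K m.-1 = r%:R * gp R r K m.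
  rewrite -(gp_S R r0 (_ : K <= m.-1)%N); last by clear -Km; lia.
  by rewrite prednK // mulrC.
have h2 : ((n./2).*2 <= n)%N by rewrite -{2}(odd_double_half n) leq_addl.
rewrite -muln2 in h2.
apply: (@ineq_core R (gp R r K m) r%:R) => //.
- exact: gp_pos.
- by rewrite GQ.
- exact: ltW (gp_pos _ _ _ _).
- exact: ltW (gp_pos _ _ _ _).
case: (leqP m.+1 (n - m).-1) => h.
  left; rewrite gp_S //; clear -Km; lia.
right; rewrite -GQ; split; apply: gp_anti => //; clear -h h2 mle Km; lia.
Qed.


Lemma card_lt n k : (k <= n)%N -> #|[set v : 'I_n | (v < k)%N]| = k.
Proof.
move=> kn.
have -> : [set v : 'I_n | (v < k)%N] = widen_ord kn @: 'I_k.
  apply/setP => v; rewrite inE; apply/idP/imsetP => [vk|[i _ ->]]; last by rewrite /= ltn_ord.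
  by exists (Ordinal vk) => //; apply: val_inj.
by rewrite card_imset ?card_ord //; by move=> i j /(congr1 val) /= /val_inj.
Qed.

Lemma phi_cons (R : realType) r K n (o1 o2 : 'I_n) x : o1 != o2 -> (0 < r)%N -> (1 <= K)%N ->
  phi R r K o1 o2 x < 1 -> consensus x = false.
Proof.
move=> o12 r0 K1 px; have [tw Km] := phi_small r0 px.
have [_ _ H] := good_facts o12 (good_of o12 tw K1 Km).
case: H => xuw _ _ _; apply/negbTE; apply/negP => /forallP /(_ (uu o1 o2 x)) /forallP /(_ (ww o1 o2 x)).
by move/negP: xuw.
Qed.

Lemma phi_ge0 (R : realType) r K n (o1 o2 : 'I_n) x : (0 < r)%N -> 0 <= phi R r K o1 o2 x.
Proof. by move=> r0; rewrite /phi; case: ifP => _ //; apply: ltW; apply: gp_pos. Qed.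

Unset Implicit Arguments.

Theorem mainTheorem7 (R : realType) :
  exists c : R, 0 < c /\
  exists C : R, 0 < C /\
  exists N : nat, forall n : nat, (N <= n)%N ->
  exists (A : adversary n) (x0 : config n),
    valid_adversary A /\
    ((C * (n%:R / c) `^ (n%:R / c))%:E <= expected_consensus_time R A x0)%E.
Proof.
exists 32; split => //; exists (1/4); split; first lra.
exists 64%N => n Nn.
have n0 : (0 < n)%N by lia.
have n1 : (1 < n)%N by lia.
pose o1 : 'I_n := Ordinal n0; pose o2 : 'I_n := Ordinal n1.
have o12 : o1 != o2 by [].
pose r := (n %/ 16)%N; pose K := (n %/ 4)%N.
have r2 : (2 <= r)%N by rewrite /r; lia.
have r0 : (0 < r)%N by lia.
have rK : (4 * r <= K.+1)%N by rewrite /r /K; lia.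
have K1 : (1 <= K)%N by rewrite /K; lia.
pose x0 : config n := [ffun v : 'I_n => if (v < n./2)%N then o1 else o2].
exists (fun h => Gr o1 o2 (last x0 h)), x0; split.
  by move=> h; apply: Gr_valid.
pose d : R := gp R r K (n./2 - 1).
have SB := @surv_bound R n x0 (Gr o1 o2) (phi R r K o1 o2) d (ltW (gp_pos _ _ _ r0))
  (fun x => @phi_ge0 R r K n o1 o2 x r0) (fun x px => @phi_cons R r K n o1 o2 x o12 r0 K1 px)
  (fun x px => proj1 (@phi_step R r K n o1 o2 x o12 r2 rK K1 px))
  (fun x px => proj2 (@phi_step R r K n o1 o2 x o12 r2 rK K1 px)).
have hn2 : n./2 = (n %/ 2)%N by rewrite divn2.
have tw0 : two o1 o2 x0 by apply/forallP => v; rewrite ffunE; case: ifP => _; rewrite eqxx ?orbT.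
have c1 : cnt x0 o1 = n./2.
  rewrite /cnt (_ : [set v | x0 v == o1] = [set v : 'I_n | (v < n./2)%N]).
    by apply: card_lt; rewrite hn2; lia.
  apply/setP => v; rewrite !inE ffunE; case: ifP => _; rewrite ?eqxx //.
have c2 := cnt_two o12 tw0.
have mu0 : mu o1 o2 x0 = n./2 by rewrite /mu c1; rewrite c1 hn2 in c2 *; lia.
have phi0 : phi R r K o1 o2 x0 <= 1/4.
  rewrite /phi tw0 mu0.
  apply: le_trans (_ : gp R r K (K + 2) <= _); first by apply: gp_anti => //; rewrite hn2 /K; lia.
  rewrite /gp (_ : (K + 2 - K = 2)%N); last lia.
  have rR : (2 : R) <= r%:R by rewrite ler_nat.
  have r4 : (4 : R) <= r%:R ^+ 2 by rewrite expr2; nra.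
  rewrite div1r lef_pV2 ?posrE //; first lra.
pose D := (n./2 - 1 - K)%N.
have D2 : (2 <= D)%N by rewrite /D hn2 /K; lia.
pose N1 := (r ^ (D - 1))%N.
have dE : d = (r%:R ^+ (D - 1) * r%:R)^-1.
  by rewrite /d /gp -exprSr; congr (_ ^+ _ )^-1; rewrite /D; lia.
have term : forall t, (t < N1)%N -> 1/4 <= prob_T_gt R (fun h => Gr o1 o2 (last x0 h)) x0 t.
  move=> t tN; apply: le_trans (SB t [:: x0] x0 erefl).
  have X0 : (0 : R) < r%:R ^+ (D - 1) by rewrite exprn_gt0 // ltr0n.
  have tX : (t.+1)%:R <= (r%:R ^+ (D - 1) : R) by rewrite -natrX ler_nat.
  have rR : (2 : R) <= r%:R by rewrite ler_nat.
  have : (t.+1)%:R * d <= 1/2.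
    rewrite dE invfM mulrA.
    have h1 : (t.+1)%:R * (r%:R ^+ (D - 1))^-1 <= (1 : R).
      by rewrite ler_pdivrMr // mul1r.
    have h2 : (r%:R : R)^-1 <= 1/2.
      by rewrite div1r lef_pV2 ?posrE ?ltr0n //; lra.
    have h3 : 0 <= (r%:R : R)^-1 by rewrite invr_ge0.
    have h4 : 0 <= (t.+1)%:R * (r%:R ^+ (D - 1) : R)^-1 by apply: mulr_ge0; rewrite ?invr_ge0 ltW.
    nra.
  lra.
rewrite /expected_consensus_time.
apply: le_trans (nneseries_lim_ge N1 _); last first.
  by move=> t _ _; rewrite lee_fin; apply: surv_ge0.
rewrite sumEFin lee_fin.
apply: le_trans (_ : \sum_(0 <= t < N1) (1/4 : R) <= _); last first.
  by apply: ler_sum_nat => t /andP[_ tN]; apply: term.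
rewrite sumr_const_nat subn0 -mulr_natr.
rewrite -[X in _ <= X]mulr_natr; apply: ler_wpM2l; first lra.
have y0 : (0 : R) <= n%:R / 32 by apply: divr_ge0.
have yr : n%:R / 32 <= (r%:R : R).
  rewrite ler_pdivrMr // -natrM ler_nat /r; lia.
have yD : n%:R / 32 <= ((D - 1)%:R : R).
  rewrite ler_pdivrMr // -natrM ler_nat /D hn2 /K; lia.
apply: le_trans (_ : (r%:R) `^ (n%:R / 32) <= _).
  by apply: ge0_ler_powR; rewrite ?nnegrE //; apply: le_trans yr.
apply: le_trans (_ : (r%:R : R) `^ (D - 1)%:R <= _).
  by apply: ler_powR => //; rewrite ler1n.
by rewrite powR_mulrn // natrX.
Qed.
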